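(* Every pairwise social choice correspondence that satisfies strategyproofness, non-imposition, homogeneity, and neutrality is strongly Condorcet-consistent.
   Context: Let $A$ be a finite set of alternatives; a preference profile $R$ assigns a strict total order $\succ_i$ on $A$ to each voter $i$ of a finite non-empty electorate $N\subseteq\{1,2,\dots\}$; $\mathcal{R}^*(A)$ is the set of all profiles over all electorates. $g_R(x,y)=|\{i: x\succ_i y\}|-|\{i: y\succ_i x\}|$; $x\succ_R y$ iff $g_R(x,y)>0$. A Condorcet winner is $x$ with $x\succ_R y$ for all $y\ne x$. An SCC is $f:\mathcal{R}^*(A)\to 2^A\setminus\{\emptyset\}$; pairwise: $f(R)=f(R')$ whenever $g_R=g_{R'}$; non-imposing: for every $x\in A$ some profile has $f(R)=\{x\}$; neutral: for profiles $R,R'$ on the same electorate and a permutation $\pi$ of $A$ with $x\succ_i y\iff\pi(x)\succ'_i\pi(y)$ for all $x,y,i$, $f(R')=\pi(f(R))$; homogeneous: $f(kR)=f(R)$ for $k$ copies $kR$ of $R$; strongly Condorcet-consistent: $f(R)=\{x\}$ iff $x$ is the Condorcet winner in $R$. Fishburn's extension: for $X\ne Y$, $X\succ_i^F Y$ iff $x\succ_i y$ for all $x\in X\setminus Y,y\in Y$ and for all $x\in X,y\in Y\setminus X$; $f$ is strategyproof if no voter $i$ can change only his own preference to move from $R$ to $R'$ with $f(R')\succ_i^F f(R)$. *)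

(* Defs.v *)
From mathcomp Require Import all_boot all_order all_algebra all_fingroup.
Set Implicit Arguments. Unset Strict Implicit. Unset Printing Implicit Defensive.
Import Order.TTheory GRing.Theory Num.Theory.

Section Defs.
Variable A : finType.

Record pref := Pref {
  prel :> rel A;
  pref_irr : forall x, ~~ prel x x;
  pref_trans : forall x y z, prel x y -> prel y z -> prel x z;
  pref_total : forall x y, x != y -> prel x y || prel y x }.

(* A profile: a finite non-empty electorate N of positive naturals (listed
   without repetition) and a preference for each voter.  Values of [prefs]
   outside [voters] are irrelevant junk. *)
Record profile := Profile {
  voters : seq nat;
  voters_uniq : uniq voters;
  voters_pos : 0 \notin voters;
  voters_nonempty : voters != [::];
  prefs : nat -> pref }.

Definition same_pref (p q : pref) : Prop := forall x y, p x y = q x y.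

Definition margin (R : profile) (x y : A) : int :=
  \sum_(i <- voters R) ((prefs R i x y)%:Z - (prefs R i y x)%:Z).

Definition condorcet_winner (R : profile) (x : A) : Prop :=
  forall y, y != x -> (0 < margin R x y)%R.

Definition SCC := profile -> {set A}.

Definition is_SCC (f : SCC) : Prop := forall R, f R != set0.

Definition pairwise_scc (f : SCC) : Prop :=
  forall R R', (forall x y, margin R x y = margin R' x y) -> f R = f R'.

Definition non_imposing (f : SCC) : Prop :=
  forall x, exists R, f R = [set x].

Definition neutral (f : SCC) : Prop :=
  forall (R R' : profile) (pi : {perm A}),
    voters R = voters R' ->
    (forall i, i \in voters R -> forall x y, prefs R i x y = prefs R' i (pi x) (pi y)) ->
    f R' = pi @: f R.

(* R2 consists of k copies of R: phi sends each voter of R2 to the voter of R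
   it copies, every voter of R has exactly k copies, with the same preference. *)
Definition copies (k : nat) (R R2 : profile) : Prop :=
  exists phi : nat -> nat,
    [/\ forall j, j \in voters R2 -> phi j \in voters R,
        forall i, i \in voters R -> count (fun j => phi j == i) (voters R2) = k &
        forall j, j \in voters R2 -> same_pref (prefs R2 j) (prefs R (phi j))].

Definition homogeneous (f : SCC) : Prop :=
  forall k R R2, 0 < k -> copies k R R2 -> f R2 = f R.

Definition fishburn (p : pref) (X Y : {set A}) : Prop :=
  X != Y /\
  (forall x y, x \in X :\: Y -> y \in Y -> p x y) /\
  (forall x y, x \in X -> y \in Y :\: X -> p x y).

Definition strategyproof (f : SCC) : Prop :=
  forall (R R' : profile) (i : nat),
    voters R = voters R' -> i \in voters R ->
    (forall j, j \in voters R -> j != i -> same_pref (prefs R j) (prefs R' j)) ->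
    ~ fishburn (prefs R i) (f R') (f R).

Definition strongly_condorcet_consistent (f : SCC) : Prop :=
  forall R x, f R = [set x] <-> condorcet_winner R x.

End Defs.

(* Main.v *)
Require Import Defs.
From mathcomp Require Import all_boot all_order all_algebra all_fingroup.
From mathcomp Require Import zify.
Set Implicit Arguments. Unset Strict Implicit. Unset Printing Implicit Defensive.
Import Order.TTheory GRing.Theory Num.Theory.

Section Aux.
Variable A : finType.

Definition cc (p : pref A) (u v : A) : int := ((p u v)%:Z - (p v u)%:Z)%R.

Lemma margin_cc (R : profile A) u v :
  margin R u v = (\sum_(i <- voters R) cc (prefs R i) u v)%R.
Proof. by []. Qed.

Section Rank.
Variable r : A -> nat.
Hypothesis rinj : injective r.
Definition rrel : rel A := fun u v => r u < r v.
Lemma rrel_irr u : ~~ rrel u u. Proof. by rewrite /rrel ltnn. Qed.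
Lemma rrel_trans u v w : rrel u v -> rrel v w -> rrel u w.
Proof. exact: ltn_trans. Qed.
Lemma rrel_total u v : u != v -> rrel u v || rrel v u.
Proof.
move=> H; rewrite /rrel -neq_ltn; apply: contra H => /eqP/rinj ->; by [].
Qed.
Definition pref_of_rank : pref A := @Pref A rrel rrel_irr rrel_trans rrel_total.
End Rank.

Section Rev.
Variable p : pref A.
Definition revrel : rel A := fun u v => p v u.
Lemma revrel_irr u : ~~ revrel u u. Proof. exact: pref_irr. Qed.
Lemma revrel_trans u v w : revrel u v -> revrel v w -> revrel u w.
Proof. rewrite /revrel => h1 h2; exact: pref_trans h2 h1. Qed.
Lemma revrel_total u v : u != v -> revrel u v || revrel v u.
Proof. by rewrite /revrel orbC; apply: pref_total. Qed.
Definition pref_rev : pref A := @Pref A revrel revrel_irr revrel_trans revrel_total.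
End Rev.

Section Comp.
Variable p : pref A.
Variable g : A -> A.
Hypothesis ginj : injective g.
Definition comprel : rel A := fun u v => p (g u) (g v).
Lemma comprel_irr u : ~~ comprel u u. Proof. exact: pref_irr. Qed.
Lemma comprel_trans u v w : comprel u v -> comprel v w -> comprel u w.
Proof. rewrite /comprel => h1 h2; exact: pref_trans h1 h2. Qed.
Lemma comprel_total u v : u != v -> comprel u v || comprel v u.
Proof. move=> H; apply: pref_total; by rewrite (inj_eq ginj). Qed.
Definition pref_comp : pref A := @Pref A comprel comprel_irr comprel_trans comprel_total.
End Comp.

Lemma cc_rev p u v : cc (pref_rev p) u v = (- cc p u v)%R.
Proof. by rewrite /cc /= /revrel opprB. Qed.

Lemma cc_comp p g (gi : injective g) u v : cc (pref_comp p gi) u v = cc p (g u) (g v).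
Proof. by []. Qed.

Lemma cc_anti p u v : cc p u v = (- cc p v u)%R.
Proof. by rewrite /cc opprB. Qed.

Lemma cc_le1 p u v : (cc p u v <= 1)%R.
Proof. rewrite /cc; case: (p u v); case: (p v u); by []. Qed.

Lemma margin_anti (R : profile A) u v : margin R u v = (- margin R v u)%R.
Proof. rewrite !margin_cc -sumrN; apply: eq_bigr => i _; exact: cc_anti. Qed.

Lemma margin_diag (R : profile A) u : margin R u u = 0%R.
Proof. by rewrite margin_cc big1 // => i _; rewrite /cc subrr. Qed.

Lemma sum_cc_le (s : seq nat) (P : nat -> pref A) u v :
  (\sum_(i <- s) cc (P i) u v <= (size s)%:Z)%R.
Proof.
elim: s => [|i s IH]; first by rewrite big_nil.
rewrite big_cons /= -addn1 PoszD addrC lerD //; exact: cc_le1.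
Qed.

Lemma margin_le (R : profile A) u v : (margin R u v <= (size (voters R))%:Z)%R.
Proof. exact: sum_cc_le. Qed.


Section Add2.
Variable P : profile A.
Variables s t : pref A.
Definition mx := \max_(i <- voters P) i.
Definition v1 := mx.+1.
Definition v2 := mx.+2.
Lemma notin_big k : mx < k -> k \notin voters P.
Proof.
move=> h; apply/negP => H.
have := @leq_bigmax_seq _ (voters P) predT id k H isT; rewrite -/mx; lia.
Qed.
Lemma add2_uniq : uniq (v1 :: v2 :: voters P).
Proof.
rewrite /= in_cons negb_or !notin_big ?voters_uniq ?andbT /v1 /v2 //; lia.
Qed.
Lemma add2_pos : 0 \notin (v1 :: v2 :: voters P).
Proof. by rewrite !in_cons /= voters_pos. Qed.
Lemma add2_ne : (v1 :: v2 :: voters P) != [::].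
Proof. by []. Qed.
Definition add2_prefs (j : nat) : pref A :=
  if j == v1 then s else if j == v2 then t else prefs P j.
Definition add2 : profile A := @Profile A _ add2_uniq add2_pos add2_ne add2_prefs.

Lemma margin_add2 u v : margin add2 u v = (cc s u v + cc t u v + margin P u v)%R.
Proof.
rewrite !margin_cc /= !big_cons /add2_prefs eqxx.
have -> : (v2 == v1) = false by rewrite /v1 /v2; lia.
rewrite eqxx addrA; congr (_ + _)%R.
apply: eq_big_seq => i iP.
have -> : (i == v1) = false by apply/negP => /eqP E; move: iP; rewrite E (negbTE (notin_big (ltnSn mx))).
have -> : (i == v2) = false by apply/negP => /eqP E; move: iP; rewrite E (negbTE (notin_big (leqnSn mx.+1))).
by [].
Qed.
End Add2.

Section Double.
Variable R : profile A.
Definition dvoters := map double (voters R) ++ map (fun i => i.*2.+1) (voters R).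
Lemma dbl_uniq : uniq dvoters.
Proof.
rewrite cat_uniq !map_inj_uniq ?voters_uniq //=; last exact: double_inj;
  last by move=> i j; rewrite -!muln2; lia.
rewrite andbT; apply/hasPn => j /mapP [i _ ->]; apply/mapP => [[k _ E]].
by move: E; rewrite -!muln2; lia.
Qed.
Lemma dbl_pos : 0 \notin dvoters.
Proof.
rewrite mem_cat negb_or; apply/andP; split; apply/mapP => [[i iP E]].
  have i0 : i = 0 by move: E; rewrite -muln2; lia.
  by move: iP; rewrite i0 (negbTE (voters_pos R)).
by [].
Qed.
Lemma dbl_ne : dvoters != [::].
Proof. by rewrite /dvoters; case: (voters R) (voters_nonempty R). Qed.
Definition dbl_prefs (j : nat) : pref A := prefs R j./2.
Definition dbl : profile A := @Profile A _ dbl_uniq dbl_pos dbl_ne dbl_prefs.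

Lemma half_odd i : (i.*2.+1)./2 = i.
Proof. by rewrite /= uphalf_double. Qed.

Lemma dbl_copies : copies 2 R dbl.
Proof.
exists half; split.
- move=> j; rewrite /= mem_cat => /orP [] /mapP [i iP ->].
    by rewrite doubleK.
  by rewrite half_odd.
- move=> i iP; rewrite /= count_cat !count_map.
  rewrite (@eq_count _ _ (pred1 i)); last by move=> j /=; rewrite doubleK.
  rewrite (@eq_count _ (preim _ _) (pred1 i)); last by move=> j /=; rewrite ?half_odd ?uphalf_double.
  by rewrite count_uniq_mem ?voters_uniq // iP.
- by move=> j _ u v.
Qed.

Lemma margin_dbl u v : margin dbl u v = (margin R u v *+ 2)%R.
Proof.
rewrite !margin_cc /= /dvoters big_cat !big_map /dbl_prefs mulr2n.
congr (_ + _)%R; apply: eq_bigr => i _; by rewrite ?doubleK ?half_odd.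
Qed.
End Double.

Fixpoint dbl_iter (n : nat) (R : profile A) : profile A :=
  if n is n'.+1 then dbl (dbl_iter n' R) else R.

Lemma margin_dbl_iter n R u v : margin (dbl_iter n R) u v = (margin R u v *+ 2 ^ n)%R.
Proof.
elim: n => [|n IH] /=; first by rewrite expn0 mulr1n.
by rewrite margin_dbl IH -mulrnA expnSr.
Qed.

Lemma homog_iter (f : SCC A) : homogeneous f -> forall n R, f (dbl_iter n R) = f R.
Proof.
move=> H; elim => [|n IH] R //=.
by rewrite (H 2 _ _ isT (dbl_copies _)) IH.
Qed.

Section Perm.
Variable R : profile A.
Variable pi : {perm A}.
Definition pprof : profile A :=
  @Profile A _ (voters_uniq R) (voters_pos R) (voters_nonempty R)
    (fun i => pref_comp (prefs R i) (@perm_inj _ pi)).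
Lemma margin_pprof u v : margin pprof u v = margin R (pi u) (pi v).
Proof. by []. Qed.
End Perm.


Definition E (a b u v : A) : int :=
  ((((u == a) && (v == b)) : nat)%:Z - (((u == b) && (v == a)) : nat)%:Z)%R.

Section Sigma.
Variables x a b : A.
Hypothesis ab : a != b.
Hypothesis bx : b != x.
Definition rs (u : A) : nat :=
  if u == x then 0 else if u == a then 1 else if u == b then 2 else (enum_rank u : nat).+3.
Lemma rs_inj : injective rs.
Proof.
move=> u v; rewrite /rs.
repeat (case: ifP => [/eqP ?|?]); subst => //.
by move=> [] /ord_inj /enum_rank_inj.
Qed.

Definition sig := pref_of_rank rs_inj.
Definition sig' := pref_comp sig (@perm_inj _ (tperm a b)).
Definition tau := pref_rev sig'.

Lemma sig_top w : w != x -> sig x w.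
Proof.
move=> wx; rewrite /= /rrel /rs eqxx (negbTE wx).
by case: ifP => //; case: ifP.
Qed.

Lemma rs_ab : rs a < rs b.
Proof.
rewrite /rs (negbTE bx) [b == a]eq_sym (negbTE ab) !eqxx.
by case: ifP.
Qed.

Lemma rs_other w : w != a -> w != b -> (rs w < rs a) || (rs b < rs w).
Proof.
move=> wa wb; rewrite /rs (negbTE wa) (negbTE wb) (negbTE bx) [b == a]eq_sym (negbTE ab) !eqxx.
case: (eqVneq w x) => [wx|wx].
  by subst w; rewrite eq_sym (negbTE wa).
by case: ifP => _; rewrite ?orbT.
Qed.

Lemma cc_sig u v : cc sig u v = (((rs u < rs v) : nat)%:Z - ((rs v < rs u) : nat)%:Z)%R.
Proof. by []. Qed.

Lemma cc_sig_tau u v : (cc sig u v + cc tau u v = E a b u v *+ 2)%R.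
Proof.
rewrite /tau cc_rev cc_comp !cc_sig /E.
have F1 := rs_ab.
have ba : b != a by rewrite eq_sym.
case: (eqVneq u a) => [->|ua].
  rewrite tpermL ?eqxx ?(negbTE ab) /=.
  case: (eqVneq v a) => [->|va]; first by rewrite tpermL ?eqxx ?(negbTE ab) /=; lia.
  case: (eqVneq v b) => [->|vb]; first by rewrite tpermR ?eqxx ?(negbTE ba) /=; lia.
  rewrite tpermD ?[_ == v]eq_sym ?(negbTE va) ?(negbTE vb) //=.
  have := rs_other va vb; lia.
case: (eqVneq u b) => [->|ub].
  rewrite tpermR ?eqxx ?(negbTE ba) /=.
  case: (eqVneq v a) => [->|va]; first by rewrite tpermL ?eqxx /=; lia.
  case: (eqVneq v b) => [->|vb]; first by rewrite tpermR ?eqxx ?(negbTE ba) /=; lia.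
  rewrite tpermD ?[_ == v]eq_sym ?(negbTE va) ?(negbTE vb) //=.
  have := rs_other va vb; lia.
rewrite (@tpermD _ a b u) ?[_ == u]eq_sym ?(negbTE ua) ?(negbTE ub) //=.
have := rs_other ua ub.
case: (eqVneq v a) => [->|va]; first by rewrite tpermL ?eqxx ?(negbTE ab) /=; lia.
case: (eqVneq v b) => [->|vb]; first by rewrite tpermR ?eqxx ?(negbTE ba) /=; lia.
rewrite tpermD ?[_ == v]eq_sym ?(negbTE va) ?(negbTE vb) //=.
lia.
Qed.
End Sigma.

Lemma sum_lt (F G : A -> nat) a0 :
  (forall i, F i <= G i) -> F a0 < G a0 -> \sum_i F i < \sum_i G i.
Proof.
move=> le lt; rewrite (bigD1 a0) //= [X in _ < X](bigD1 a0) //=.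
by rewrite -addSn leq_add // leq_sum.
Qed.

Definition Nm (h : A -> A -> int) := \sum_(u : A) \sum_(v : A) absz (h u v).

Lemma Nm_dec (h : A -> A -> int) u v :
  (0 < h u v)%R -> u != v -> h v u = (- h u v)%R ->
  Nm (fun u' v' => h u' v' - E u v u' v')%R < Nm h.
Proof.
move=> hpos uv hvu.
have pw : forall u' v', absz (h u' v' - E u v u' v')%R <= absz (h u' v').
  move=> u' v'; rewrite /E.
  case: (u' =P u) => [E1|_]; case: (v' =P v) => [E2|_];
  case: (u' =P v) => [E3|_]; case: (v' =P u) => [E4|_] /=; subst; try lia;
  by rewrite eqxx in uv.
rewrite /Nm; apply: (sum_lt (a0 := u)) => [u'|]; first by apply: leq_sum => v' _; apply: pw.
apply: (sum_lt (a0 := v)) => [v'|]; first by apply: pw.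
rewrite /E !eqxx /= [v == u]eq_sym (negbTE uv) /=; lia.
Qed.

Section Reach.
Variable f : SCC A.
Hypothesis fpw : pairwise_scc f.
Hypothesis fsp : strategyproof f.
Variable x : A.

Definition Reach (g : A -> A -> int) :=
  exists P : profile A, f P = [set x] /\ forall u v, margin P u v = g u v.

Lemma reach_ext g g' : (forall u v, g u v = g' u v) -> Reach g -> Reach g'.
Proof. by move=> e [P [fP mP]]; exists P; split => // u v; rewrite mP e. Qed.

Lemma reach_step g a b : a != b -> b != x -> Reach g ->
  Reach (fun u v => g u v + E a b u v *+ 2)%R.
Proof.
move=> ab bx [P [fP mP]].
pose s : pref A := sig x a b.
pose Q1 := add2 P s (pref_rev s).
pose Q2 := add2 P s (tau x a b).
have m1 : forall u v, margin Q1 u v = margin P u v.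
  by move=> u v; rewrite margin_add2 cc_rev addrN add0r.
have f1 : f Q1 = [set x] by rewrite (fpw m1).
have f2 : f Q2 = [set x].
  apply/eqP; apply/negPn/negP => ne.
  apply: (fsp (R:=Q1) (R':=Q2) (i:=v2 P)).
  - by [].
  - by rewrite /= !in_cons eqxx orbT.
  - move=> j _ jn u v; rewrite /= /add2_prefs (negbTE jn); by [].
  rewrite f1 /= /add2_prefs.
  have -> : (v2 P == v1 P) = false by rewrite /v1 /v2; lia.
  rewrite eqxx; split; first exact: ne.
  split.
    move=> a' b' /setDP [_]; rewrite in_set1 => a'x /set1P ->.
    exact: sig_top.
  move=> a' b' a'Y /setDP [/set1P -> xY].
  apply: sig_top; apply: contraNneq xY => <-; exact: a'Y.
exists Q2; split => // u v.
rewrite margin_add2 (cc_sig_tau ab bx) mP; lia.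
Qed.

Lemma reach_zero g h : (forall u v, h u v = 0%R) -> Reach g ->
  Reach (fun u v => g u v + h u v *+ 2)%R.
Proof. move=> h0; apply: reach_ext => u v; rewrite h0; lia. Qed.

Lemma reach_gen n : forall g h, Nm h <= n ->
  (forall u v, h u v = - h v u)%R -> (forall v, (0 <= h x v)%R) -> Reach g ->
  Reach (fun u v => g u v + h u v *+ 2)%R.
Proof.
elim: n => [|n IH] g h hN hanti hx Rg.
  apply: reach_zero => // u v.
  have : absz (h u v) <= 0.
    apply: leq_trans hN; rewrite /Nm (bigD1 u) //= (bigD1 v) //=.
    by rewrite -addnA leq_addr.
  lia.
case: (boolP [exists u, exists v, h u v != 0%R]); last first.
  move=> /existsPn H; apply: reach_zero => // u v.
  by have /existsPn/(_ v) := H u; rewrite negbK => /eqP.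
move=> /existsP [u0 /existsP [v0 nz]].
have [u [v [hpos]]] : exists u v, (0 < h u v)%R.
  case: (ltrgtP (h u0 v0) 0) => [lt|gt|e]; last by rewrite e eqxx in nz.
    by exists v0, u0; rewrite hanti; lia.
  by exists u0, v0.
have uv : u != v.
  by apply/eqP => e; subst v; have := hanti u u; lia.
have vx : v != x.
  by apply/eqP => e; subst v; have := hanti u x; have := hx u; lia.
pose h1 := fun u' v' => (h u' v' - E u v u' v')%R.
have := Nm_dec hpos uv (hanti v u) => lt.
have := IH (fun u' v' => g u' v' + E u v u' v' *+ 2)%R h1.
case.
- rewrite -ltnS; exact: leq_trans lt hN.
- move=> u' v'; rewrite /h1 (hanti u' v') /E; lia.
- move=> w; have hxw := hx w; rewrite /h1 /E.
  case: (x =P u) => [E1|_]; case: (w =P v) => [E2|_];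
  case: (x =P v) => [E3|_]; case: (w =P u) => [E4|_] /=; subst; try lia;
  by rewrite eqxx in vx.
- exact: reach_step.
move=> P [fP mP]; exists P; split => // u' v'; rewrite mP /h1; lia.
Qed.
End Reach.
End Aux.

Unset Implicit Arguments.

Theorem lemma12 (A : finType) (f : SCC A) :
  is_SCC f -> pairwise_scc f -> strategyproof f -> non_imposing f ->
  homogeneous f -> neutral f ->
  strongly_condorcet_consistent f.
Proof.
move=> _ fpw fsp fni fh fn R x; split.
- move=> fR y yx.
  rewrite ltNge; apply/negP => tle.
  pose n := size (voters R).
  pose C : int := n%:Z.
  pose inxy (w : A) := (w == x) || (w == y).
  pose mm (u v : A) : int :=
    if inxy u then (if inxy v then 0%R else C) else if inxy v then (- C)%R else margin R u v.
  pose h u v := (mm u v - margin R u v)%R.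
  have R1 : Reach f x (fun u v => margin R u v *+ 2)%R.
    exists (dbl R); split; last by move=> u v; rewrite margin_dbl.
    by rewrite (fh 2 R (dbl R) isT (dbl_copies R)).
  have hanti : forall u v, h u v = (- h v u)%R.
    move=> u v; have := margin_anti R u v; rewrite /h /mm.
    by case: (inxy u); case: (inxy v) => /=; lia.
  have hx : forall v, (0 <= h x v)%R.
    move=> v; rewrite /h /mm /inxy eqxx /=.
    have := margin_le R x v; rewrite -/n -/C.
    case: (eqVneq v x) => [->|vx] /=; first by rewrite margin_diag; lia.
    case: (eqVneq v y) => [->|vy] /=; lia.
  have [Q [fQ mQ]] := reach_gen fpw fsp (leqnn (Nm h)) hanti hx R1.
  pose pi := tperm x y.
  have inpi : forall w, inxy (pi w) = inxy w.
    move=> w; rewrite /inxy /pi.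
    case: (eqVneq w x) => [->|wx]; first by rewrite tpermL eqxx orbT.
    case: (eqVneq w y) => [->|wy]; first by rewrite tpermR eqxx.
    rewrite tpermD; [by rewrite (negbTE wx) (negbTE wy) | by rewrite eq_sym | by rewrite eq_sym].
  have fixpi : forall w, ~~ inxy w -> pi w = w.
    move=> w; rewrite /inxy negb_or => /andP [wx wy].
    by rewrite /pi tpermD // eq_sym.
  have mmsym : forall u v, mm (pi u) (pi v) = mm u v.
    move=> u v; rewrite /mm !inpi.
    case: (boolP (inxy u)) => iu //; case: (boolP (inxy v)) => iv //.
    by rewrite !fixpi.
  pose Q' := pprof Q pi.
  have e1 : f Q' = f Q.
    apply: fpw => u v; rewrite margin_pprof !mQ /h.
    have := mmsym u v; lia.
  have e2 : f Q' = pi @: f Q.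
    apply: fn => // i _ a b.
    by rewrite /= /comprel /pi !tpermK.
  move: e2; rewrite e1 fQ imset_set1 /pi tpermL => /set1_inj e.
  by rewrite e eqxx in yx.
- move=> cw.
  have [R0 fR0] := fni x.
  pose n0 := size (voters R0).
  have R1 : Reach f x (fun u v => margin R0 u v *+ 2)%R.
    exists (dbl R0); split; last by move=> u v; rewrite margin_dbl.
    by rewrite (fh 2 R0 (dbl R0) isT (dbl_copies R0)).
  pose h u v := (margin R u v *+ 2 ^ n0 - margin R0 u v)%R.
  have hanti : forall u v, h u v = (- h v u)%R.
    move=> u v; rewrite /h (margin_anti R u v) (margin_anti R0 u v) mulNrn; lia.
  have hx : forall v, (0 <= h x v)%R.
    move=> v; rewrite /h.
    case: (eqVneq v x) => [->|vx]; first by rewrite !margin_diag mul0rn subrr.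
    have c1 := cw v vx.
    have c2 := margin_le R0 x v.
    have c3 : n0 <= 2 ^ n0 by apply: ltnW; apply: ltn_expl.
    rewrite -/n0 in c2.
    nia.
  have [Q [fQ mQ]] := reach_gen fpw fsp (leqnn (Nm h)) hanti hx R1.
  rewrite -(homog_iter fh n0.+1 R) -fQ.
  apply: fpw => u v; rewrite margin_dbl_iter mQ /h expnSr mulrnA; lia.
Qed.
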